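(* Let $k\geq 2$, $t\geq 0$, and $n\geq k^2+tk(k-1)$ be integers such that $k^2+tk(k-1)$ divides $n$. If there exists a $(k^2+tk(k-1),k,1)$-RBIBD, then there is a coloring of the edges of the complete graph $K_n$ with $(t+1)k+1$ colors such that every monochromatic component has at most $\frac{n}{(t+1)k-t}$ vertices. In particular (the case $t=0$), if there exists an affine plane of order $k$, then there exists a coloring of the edges of $K_n$ with $k+1$ colors such that every monochromatic component has at most $\frac{n}{k}$ vertices.
   Context: A $(v,k,1)$-resolvable balanced incomplete block design ($(v,k,1)$-RBIBD) is a $k$-uniform hypergraph on $v$ vertices in which each pair of distinct vertices lies in exactly one edge, and whose edge set can be partitioned into perfect matchings. An affine plane of order $k$ is a $k$-uniform hypergraph on $k^2$ vertices with $k(k+1)$ edges such that each pair of distinct vertices lies in exactly one edge (equivalently a $(k^2,k,1)$-RBIBD). A monochromatic component is a maximal connected subgraph all of whose edges have the same color. *)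

(* Defs.v *)
From mathcomp Require Import all_boot.
Set Implicit Arguments. Unset Strict Implicit. Unset Printing Implicit Defensive.

Definition uniform (v k : nat) (B : {set {set 'I_v}}) : Prop :=
  forall b, b \in B -> #|b| = k.

Definition pairs_once (v : nat) (B : {set {set 'I_v}}) : Prop :=
  forall x y : 'I_v, x != y -> #|[set b in B | (x \in b) && (y \in b)]| = 1.

Definition perfect_matching (v : nat) (M : {set {set 'I_v}}) : Prop :=
  forall x : 'I_v, #|[set b in M | x \in b]| = 1.

Definition RBIBD (v k : nat) (B : {set {set 'I_v}}) : Prop :=
  [/\ uniform k B, pairs_once B &
      exists P : {set {set {set 'I_v}}},
        partition P B /\ forall M, M \in P -> perfect_matching M].

Definition affine_plane (k : nat) (B : {set {set 'I_(k ^ 2)}}) : Prop :=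
  [/\ #|B| = k * (k + 1), uniform k B & pairs_once B].

Definition edge_coloring (n c : nat) (col : 'I_n -> 'I_n -> 'I_c) : Prop :=
  forall x y, col x y = col y x.

Definition color_rel (n c : nat) (col : 'I_n -> 'I_n -> 'I_c) (i : 'I_c) : rel 'I_n :=
  fun x y => (x != y) && (col x y == i).

Definition mono_component (n c : nat) (col : 'I_n -> 'I_n -> 'I_c) (i : 'I_c) (x : 'I_n)
  : {set 'I_n} := [set y | connect (color_rel col i) x y].

(* Main.v *)
Require Import Defs.
From mathcomp Require Import all_boot zify.
Set Implicit Arguments. Unset Strict Implicit. Unset Printing Implicit Defensive.

Lemma sum_pred (T : finType) (A : {set T}) (P : pred T) :
  \sum_(q in A) (P q : nat) = #|[set q in A | P q]|.
Proof.
rewrite (eq_bigr (fun q => if P q then 1 else 0)); last by move=> q _; case: (P q).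
rewrite -big_mkcondr sum1dep_card; apply: eq_card => q; by rewrite !inE.
Qed.

Lemma sum_mem (T : finType) (A C : {set T}) :
  \sum_(q in A) (q \in C : nat) = #|A :&: C|.
Proof. rewrite (sum_pred A (fun q => q \in C)); apply: eq_card => q; by rewrite !inE. Qed.

Lemma block_uniq v (B : {set {set 'I_v}}) : pairs_once B ->
  forall b1 b2 x y, b1 \in B -> b2 \in B -> x != y -> x \in b1 -> y \in b1 ->
  x \in b2 -> y \in b2 -> b1 = b2.
Proof.
move=> HB b1 b2 x y b1B b2B xy x1 y1 x2 y2.
have /cards1P [a Ha] : #|[set b in B | (x \in b) && (y \in b)]| == 1 by apply/eqP; exact: HB.
have : b1 \in [set b in B | (x \in b) && (y \in b)] by rewrite inE b1B x1 y1.
have : b2 \in [set b in B | (x \in b) && (y \in b)] by rewrite inE b2B x2 y2.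
by rewrite Ha !inE => /eqP -> /eqP ->.
Qed.

Lemma exists_block v (B : {set {set 'I_v}}) : pairs_once B -> 1 < v ->
  forall p q : 'I_v, exists2 b, b \in B & (p \in b) && (q \in b).
Proof.
move=> HB Hv.
have key : forall p q : 'I_v, p != q -> exists2 b, b \in B & (p \in b) && (q \in b).
  move=> p q pq; have /cards1P [a Ha] : #|[set b in B | (p \in b) && (q \in b)]| == 1 by apply/eqP; exact: HB.
  have : a \in [set b in B | (p \in b) && (q \in b)] by rewrite Ha set11.
  by rewrite inE => /andP [aB H]; exists a.
move=> p q; case: (eqVneq p q) => [<-|]; last exact: key.
set r0 : 'I_v := Ordinal (ltnW Hv); set r1 : 'I_v := Ordinal Hv.
have [pr|pr] := eqVneq p r0.
  have pr1 : p != r1 by rewrite pr.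
  have [b bB /andP [pb _]] := key _ _ pr1; exists b => //; by rewrite pb.
have [b bB /andP [pb _]] := key _ _ pr; exists b => //; by rewrite pb.
Qed.

Lemma deg v k (B : {set {set 'I_v}}) : uniform k B -> pairs_once B ->
  forall p : 'I_v, #|[set b in B | p \in b]| * (k - 1) = v - 1.
Proof.
move=> Hu HB p.
have -> : v - 1 = #|[set~ p]| by rewrite cardsC1 card_ord; lia.
rewrite -sum_nat_const -[#|[set~ p]|]sum1_card.
have -> : \sum_(q in [set~ p]) 1 = \sum_(q in [set~ p]) \sum_(b in [set b in B | p \in b]) (q \in b : nat).
  apply: eq_bigr => q; rewrite inE => qp.
  rewrite (sum_pred _ (fun b : {set 'I_v} => q \in b)) -(HB p q); last by move: qp; rewrite in_set1 eq_sym.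
  apply: eq_card => b; rewrite !inE; by case: (b \in B).
rewrite exchange_big /=; apply: eq_bigr => b; rewrite inE => /andP [bB pb].
rewrite sum_mem setIC; have := cardsD1 p b; rewrite pb Hu //.
move=> ->; rewrite add1n subn1 /=; apply: eq_card => q; by rewrite !inE andbC.
Qed.

Lemma card_split (T : finType) (A : {set T}) (P : pred T) :
  #|[set q in A | P q]| + #|[set q in A | ~~ P q]| = #|A|.
Proof.
rewrite -(sum_pred A P) -(sum_pred A (fun q => ~~ P q)) -big_split /= -sum1_card.
by apply: eq_bigr => q _; case: (P q).
Qed.

Lemma meet v k (B : {set {set 'I_v}}) : uniform k B -> pairs_once B ->
  forall p L, L \in B -> p \notin L -> #|[set b in B | p \in b]| = k.+1 ->
  #|[set b in B | (p \in b) && [disjoint b & L]]| = 1.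
Proof.
move=> Hu HB p L LB pL Hdeg.
set Bp := [set b in B | p \in b].
have S1 : \sum_(b in Bp) #|b :&: L| = k.
  rewrite -(Hu L LB) -[RHS]sum1_card.
  transitivity (\sum_(b in Bp) \sum_(q in L) (q \in b : nat)).
    by apply: eq_bigr => b _; rewrite sum_mem setIC.
  rewrite exchange_big /=; apply: eq_bigr => q qL.
  rewrite (sum_pred _ (fun b : {set 'I_v} => q \in b)) -(HB p q); last first.
    by apply/eqP => E; rewrite E qL in pL.
  apply: eq_card => b; rewrite !inE; by case: (b \in B).
have S2 : forall b, b \in Bp -> #|b :&: L| = ~~ [disjoint b & L].
  move=> b; rewrite inE => /andP [bB pb].
  case: (boolP [disjoint b & L]) => Hd; first by rewrite (disjoint_setI0 Hd) cards0.
  apply/eqP; rewrite eqn_leq; apply/andP; split; last by rewrite card_gt0 setI_eq0.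
  apply/card_le1_eqP => x y; rewrite !inE => /andP [xb xL] /andP [yb yL].
  apply/eqP; apply: contraT => xy.
  have E := block_uniq HB bB LB xy yb xb yL xL.
  by rewrite -E pb in pL.
rewrite (eq_bigr _ S2) (sum_pred _ (fun b : {set 'I_v} => ~~ [disjoint b & L])) in S1.
have := card_split Bp (fun b : {set 'I_v} => ~~ [disjoint b & L]).
rewrite S1 Hdeg => H.
have -> : [set b in B | (p \in b) && [disjoint b & L]] = [set q in Bp | ~~ ~~ [disjoint q & L]].
  by apply/setP => b; rewrite !inE negbK andbA.
lia.
Qed.

Lemma closed_pre (T T' : finType) (e : rel T) (h : T -> T') (S : {set T'}) :
  (forall y z, e y z -> h y \in S -> h z \in S) -> (forall y z, e y z -> e z y) ->
  closed e [set y | h y \in S].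
Proof.
move=> H1 H2 y z eyz; rewrite !inE; apply/idP/idP; first exact: H1.
by apply: H1; apply: H2.
Qed.

Lemma core v k c m (B : {set {set 'I_v}}) (cl : {set 'I_v} -> 'I_c) :
  uniform k B -> pairs_once B -> 1 < v -> 0 < k ->
  (forall b1 b2 p, b1 \in B -> b2 \in B -> cl b1 = cl b2 -> p \in b1 -> p \in b2 -> b1 = b2) ->
  exists col : 'I_(m * v) -> 'I_(m * v) -> 'I_c,
    edge_coloring col /\ forall i x, #|mono_component col i x| <= m * k.
Proof.
move=> Hu HB Hv Hk Hcl.
have E : #|{: 'I_v * 'I_m}| = m * v by rewrite card_prod !card_ord mulnC.
pose g (x : 'I_(m * v)) : 'I_v * 'I_m := enum_val (cast_ord (esym E) x).
have ginj : injective g by move=> x y /enum_val_inj /cast_ord_inj.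
pose f x := (g x).1.
pose blk (p q : 'I_v) := odflt set0 [pick b in B | [set p; q] \subset b].
have blkP : forall p q, [/\ blk p q \in B, p \in blk p q & q \in blk p q].
  move=> p q; rewrite /blk; case: pickP => [b /andP [bB sub] | none] /=.
    by split => //; apply: (subsetP sub); rewrite !inE eqxx ?orbT.
  exfalso; have [b bB /andP [pb qb]] := exists_block HB Hv p q.
  by have := none b; rewrite bB /= subUset !sub1set pb qb.
have blkC : forall p q, blk p q = blk q p by move=> p q; rewrite /blk setUC.
pose col x y := cl (blk (f x) (f y)).
exists col; split; first by move=> x y; rewrite /col blkC.
move=> i x.
pose U := \bigcup_(b in B | (cl b == i) && (f x \in b)) b.
pose S := f x |: U.
have imp : forall y z, col y z = i -> f y \in S -> f z \in S.
  move=> y z Hc; rewrite /col in Hc; have [bB yb zb] := blkP (f y) (f z).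
  rewrite !inE => /orP [/eqP fyx | fyU]; apply/orP; right; apply/bigcupP.
    by exists (blk (f y) (f z)) => //; rewrite bB /= Hc eqxx -fyx yb.
  case/bigcupP: fyU => b' /andP [b'B /andP [/eqP cb' xb']] yb'.
  have Eb := Hcl _ _ _ bB b'B (etrans Hc (esym cb')) yb yb'.
  by exists b'; rewrite ?b'B ?cb' ?eqxx ?xb' // -Eb.
have clo : closed (color_rel col i) [set y | f y \in S].
  apply: closed_pre; first by move=> y z /andP [_ /eqP Hc]; apply: imp.
  move=> y z /andP [yz /eqP Hc]; apply/andP; split; first by rewrite eq_sym.
  by rewrite /col blkC -/(col y z) Hc.
have sub : mono_component col i x \subset [set y | f y \in S].
  apply/subsetP => y; rewrite inE => cxy.
  by rewrite -(closed_connect clo cxy) inE setU11.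
have cS : #|S| <= k.
  case: (pickP [pred b in B | (cl b == i) && (f x \in b)]) => [b0 Hb0 | none].
    move: (Hb0); rewrite /= => /andP [b0B /andP [/eqP c0 x0]].
    rewrite -(Hu _ b0B); apply: subset_leq_card; apply/subsetP => p.
    rewrite !inE => /orP [/eqP -> //| /bigcupP [b' /andP [b'B /andP [/eqP cb' xb']] pb']].
    by rewrite (Hcl _ _ _ b0B b'B (etrans c0 (esym cb')) x0 xb').
  rewrite /S /U big_pred0; first by rewrite setU0 cards1.
  by move=> b; have := none b.
apply: (leq_trans (subset_leq_card sub)).
rewrite -(card_imset _ ginj).
apply: (@leq_trans #|setX S [set: 'I_m]|).
  apply: subset_leq_card; apply/subsetP => w /imsetP [y]; rewrite inE => fy ->.
  by move: fy; rewrite /f; case: (g y) => a b /= ha; rewrite in_setX ha in_setT.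
by rewrite cardsX cardsT card_ord mulnC leq_mul2l cS orbT.
Qed.

Lemma inj_ord (T : finType) (S : {set T}) c : 0 < c -> #|S| <= c ->
  exists h : T -> 'I_c, {in S &, injective h}.
Proof.
move=> c0 Sc.
exists (fun x => insubd (Ordinal c0) (index x (enum S))).
move=> x y xS yS /(congr1 val); rewrite !val_insubd.
have ix : index x (enum S) < c by rewrite (leq_trans _ Sc) // cardE index_mem mem_enum.
have iy : index y (enum S) < c by rewrite (leq_trans _ Sc) // cardE index_mem mem_enum.
rewrite ix iy => E.
have Hx : nth x (enum S) (index x (enum S)) = x by apply: nth_index; rewrite mem_enum.
have Hy : nth x (enum S) (index y (enum S)) = y by apply: nth_index; rewrite mem_enum.
by rewrite -Hx E Hy.
Qed.

Lemma card1_eq (T : finType) (A : {set T}) x y : #|A| = 1 -> x \in A -> y \in A -> x = y.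
Proof.
move=> H; have /cards1P [a ->] : #|A| == 1 by rewrite H.
by rewrite !inE => /eqP -> /eqP ->.
Qed.

Lemma part1 : forall k t n : nat,
    2 <= k ->
    k ^ 2 + t * k * (k - 1) <= n ->
    (k ^ 2 + t * k * (k - 1)) %| n ->
    (exists B : {set {set 'I_(k ^ 2 + t * k * (k - 1))}}, RBIBD k B) ->
    exists col : 'I_n -> 'I_n -> 'I_((t + 1) * k + 1),
      edge_coloring col /\
      forall i x, #|mono_component col i x| * ((t + 1) * k - t) <= n.
Proof.
move=> k t n Hk Hn /dvdnP [m Em] [B [Hu HB [P [Hpart HPm]]]]; subst n.
set v := k ^ 2 + t * k * (k - 1) in B Hu HB P Hpart HPm Hn *.
have Hv : 1 < v by rewrite /v; nia.
pose p0 : 'I_v := Ordinal (ltnW Hv).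
pose Bp0 := [set b in B | p0 \in b].
have cB : #|Bp0| = (t + 1) * k + 1.
  apply/eqP; rewrite -(@eqn_pmul2r (k - 1)); last by lia.
  rewrite (deg Hu HB p0) /v; apply/eqP; nia.
have [h hinj] := @inj_ord _ Bp0 ((t + 1) * k + 1) (ltac:(by rewrite addn1)) (eq_leq cB).
move/and3P: Hpart => [/eqP Hcov Htriv _].
pose rep b := odflt set0 [pick b' in pblock P b | p0 \in b'].
have repP : forall b, b \in B -> rep b \in Bp0 /\ rep b \in pblock P b.
  move=> b bB; have bP : b \in cover P by rewrite Hcov.
  have MP := pblock_mem bP.
  rewrite /rep; case: pickP => [b' /andP [b'M pb'] | none] /=.
    split => //; rewrite inE pb' andbT -Hcov; apply/bigcupP; by exists (pblock P b).
  exfalso; have /cards1P [a Ha] : #|[set b' in pblock P b | p0 \in b']| == 1 by rewrite HPm.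
  have : a \in [set b' in pblock P b | p0 \in b'] by rewrite Ha set11.
  by rewrite inE none.
have Hcl : forall b1 b2 p, b1 \in B -> b2 \in B -> (h \o rep) b1 = (h \o rep) b2 ->
    p \in b1 -> p \in b2 -> b1 = b2.
  move=> b1 b2 p b1B b2B /= Eh p1 p2.
  have [r1 m1] := repP _ b1B; have [r2 m2] := repP _ b2B.
  have Er := hinj _ _ r1 r2 Eh.
  have b1P : b1 \in cover P by rewrite Hcov.
  have b2P : b2 \in cover P by rewrite Hcov.
  have EM : pblock P b1 = pblock P b2.
    rewrite -(def_pblock Htriv (pblock_mem b1P) m1) Er.
    exact: (def_pblock Htriv (pblock_mem b2P) m2).
  apply: (card1_eq (HPm _ (pblock_mem b1P) p)); rewrite inE ?p1 ?p2 andbT.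
    by rewrite mem_pblock.
  by rewrite EM mem_pblock.
have [col [Hcol Hsz]] := core m Hu HB Hv (ltnW Hk) Hcl.
exists col; split => // i x.
apply: (leq_trans (leq_mul (Hsz i x) (leqnn _))).
rewrite /v; nia.
Qed.

Lemma part2 : forall k n : nat,
    2 <= k -> k ^ 2 <= n -> k ^ 2 %| n ->
    (exists B : {set {set 'I_(k ^ 2)}}, affine_plane B) ->
    exists col : 'I_n -> 'I_n -> 'I_(k + 1),
      edge_coloring col /\
      forall i x, #|mono_component col i x| * k <= n.
Proof.
move=> k n Hk Hn /dvdnP [m Em] [B [_ Hu HB]]; subst n.
have Hv : 1 < k ^ 2 by nia.
have dg : forall p, #|[set b in B | p \in b]| = k.+1.
  move=> p; apply/eqP; rewrite -(@eqn_pmul2r (k - 1)); last by lia.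
  rewrite (deg Hu HB p); apply/eqP; nia.
pose p0 : 'I_(k ^ 2) := Ordinal (ltnW Hv).
pose Bp0 := [set b in B | p0 \in b].
have [h hinj] := @inj_ord _ Bp0 (k + 1) (ltac:(by rewrite addn1)) (ltac:(by rewrite dg addn1)).
pose rep (b : {set 'I_(k ^ 2)}) : {set 'I_(k ^ 2)} := if p0 \in b then b else odflt set0 [pick b' in B | (p0 \in b') && [disjoint b' & b]].
have repP : forall b, b \in B ->
    [/\ rep b \in Bp0, p0 \in b -> rep b = b & p0 \notin b -> [disjoint rep b & b]].
  move=> b bB; rewrite /rep; case: (boolP (p0 \in b)) => pb.
    by split => //; rewrite inE bB pb.
  case: pickP => [b' /andP [b'B /andP [pb' db']] | none] /=.
    by split => //; rewrite inE b'B pb'.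
  exfalso; have /cards1P [a Ha] : #|[set b' in B | (p0 \in b') && [disjoint b' & b]]| == 1.
    by rewrite (meet Hu HB bB pb (dg p0)).
  have : a \in [set b' in B | (p0 \in b') && [disjoint b' & b]] by rewrite Ha set11.
  by rewrite inE none.
have Hcl : forall b1 b2 p, b1 \in B -> b2 \in B -> (h \o rep) b1 = (h \o rep) b2 ->
    p \in b1 -> p \in b2 -> b1 = b2.
  move=> b1 b2 p b1B b2B /= Eh p1 p2.
  have [r1 e1 d1] := repP _ b1B; have [r2 e2 d2] := repP _ b2B.
  have Er := hinj _ _ r1 r2 Eh.
  case: (boolP (p0 \in b1)) => q1; case: (boolP (p0 \in b2)) => q2.
  - by rewrite -(e1 q1) -(e2 q2).
  - by move: (disjointFr (d2 q2) (x := p)); rewrite -Er (e1 q1) p1 p2 => /(_ isT).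
  - by move: (disjointFr (d1 q1) (x := p)); rewrite Er (e2 q2) p1 p2 => /(_ isT).
  have L1 := d1 q1; have L2 := d2 q2.
  have rB : rep b1 \in B by move: r1; rewrite inE => /andP [].
  have pL : p \notin rep b1 by rewrite (disjointFl L1 p1).
  apply: (card1_eq (meet Hu HB rB pL (dg p))); rewrite inE ?b1B ?b2B ?p1 ?p2 //=.
    by rewrite disjoint_sym.
  by rewrite Er disjoint_sym.
have [col [Hcol Hsz]] := core m Hu HB Hv (ltnW Hk) Hcl.
exists col; split => // i x.
apply: (leq_trans (leq_mul (Hsz i x) (leqnn _))).
nia.
Qed.

Theorem fact4p2 :
  (forall k t n : nat,
    2 <= k ->
    k ^ 2 + t * k * (k - 1) <= n ->
    (k ^ 2 + t * k * (k - 1)) %| n ->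
    (exists B : {set {set 'I_(k ^ 2 + t * k * (k - 1))}}, RBIBD k B) ->
    exists col : 'I_n -> 'I_n -> 'I_((t + 1) * k + 1),
      edge_coloring col /\
      forall i x, #|mono_component col i x| * ((t + 1) * k - t) <= n)
  /\
  (forall k n : nat,
    2 <= k -> k ^ 2 <= n -> k ^ 2 %| n ->
    (exists B : {set {set 'I_(k ^ 2)}}, affine_plane B) ->
    exists col : 'I_n -> 'I_n -> 'I_(k + 1),
      edge_coloring col /\
      forall i x, #|mono_component col i x| * k <= n).
Proof. split; [exact: part1 | exact: part2]. Qed.
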